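(* Let $T$ be the theory of structures $(X,R,f)$ where $R$ is a reflexive and transitive binary relation and $f$ is a unary operation which strictly preserves $R$, namely, for all $d,e$: if $d\,R\,e$ and $d\neq e$, then $f(d)\,R\,f(e)$ and $f(d)\neq f(e)$. Then $T$ does not have the amalgamation property.
   Context: A theory has the amalgamation property (AP) if whenever $\mathbf{A},\mathbf{B},\mathbf{C}$ are models with $\mathbf{C}\subseteq\mathbf{A}$, $\mathbf{C}\subseteq\mathbf{B}$ and $C=A\cap B$, there are a model $\mathbf{D}$ and embeddings of $\mathbf{A}$ and $\mathbf{B}$ into $\mathbf{D}$ which agree on $C$. *)

(* Defs.v *)
Record Tmodel := {
  carrier :> Type;
  rel : carrier -> carrier -> Prop;
  op : carrier -> carrier;
  rel_refl : forall x, rel x x;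
  rel_trans : forall x y z, rel x y -> rel y z -> rel x z;
  op_strict : forall d e, rel d e -> d <> e -> rel (op d) (op e) /\ op d <> op e
}.

(* A model of T whose universe is a subset [dom] of an ambient type U, so that
   set-theoretic inclusion and intersection of universes make sense. *)
Record Tsubmodel (U : Type) := {
  dom : U -> Prop;
  srel : U -> U -> Prop;
  sop : U -> U;
  sop_closed : forall x, dom x -> dom (sop x);
  srel_refl : forall x, dom x -> srel x x;
  srel_trans : forall x y z, dom x -> dom y -> dom z ->
      srel x y -> srel y z -> srel x z;
  sop_strict : forall d e, dom d -> dom e -> srel d e -> d <> e ->
      srel (sop d) (sop e) /\ sop d <> sop e
}.
Arguments dom {U} _ _.
Arguments srel {U} _ _ _.
Arguments sop {U} _ _.

Definition substructure {U : Type} (C A : Tsubmodel U) : Prop :=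
  (forall x, dom C x -> dom A x) /\
  (forall x y, dom C x -> dom C y -> (srel C x y <-> srel A x y)) /\
  (forall x, dom C x -> sop C x = sop A x).

Definition embedding {U : Type} (A : Tsubmodel U) (D : Tmodel) (g : U -> D) : Prop :=
  (forall x y, dom A x -> dom A y -> g x = g y -> x = y) /\
  (forall x y, dom A x -> dom A y -> (srel A x y <-> rel D (g x) (g y))) /\
  (forall x, dom A x -> g (sop A x) = op D (g x)).

Definition amalgamation_property : Prop :=
  forall (U : Type) (A B C : Tsubmodel U),
    substructure C A -> substructure C B ->
    (forall x, dom C x <-> (dom A x /\ dom B x)) ->
    exists (D : Tmodel) (g h : U -> D),
      embedding A D g /\ embedding B D h /\
      (forall x, dom C x -> g x = h x).

(* Main.v *)
Require Import Defs.

Inductive P := pa | pb | pc | pe | pk.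

Definition fP (x : P) : P :=
  match x with pa => pe | pb => pe | pc => pk | pe => pk | pk => pe end.

Definition rC (x y : P) : bool :=
  match x, y with
  | pa, pa | pb, pb | pc, pc | pe, pe | pk, pk | pe, pk | pk, pe => true
  | _, _ => false end.
Definition rA (x y : P) : bool :=
  match x, y with pa, pc => true | _, _ => rC x y end.
Definition rB (x y : P) : bool :=
  match x, y with pc, pb => true | _, _ => rC x y end.
Definition dC (x : P) : bool := match x with pc | pe | pk => true | _ => false end.
Definition dA (x : P) : bool := match x with pb => false | _ => true end.
Definition dB (x : P) : bool := match x with pa => false | _ => true end.

Ltac solve_all :=
  intros;
  repeat match goal with x : P |- _ => destruct x end;
  simpl in *; try discriminate; try reflexivity;
  try (exfalso; congruence);
  try (split; [reflexivity | discriminate]).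

Definition MC : Tsubmodel P.
Proof.
  refine {| dom := fun x => dC x = true; srel := fun x y => rC x y = true; sop := fP |};
  solve_all.
Defined.
Definition MA : Tsubmodel P.
Proof.
  refine {| dom := fun x => dA x = true; srel := fun x y => rA x y = true; sop := fP |};
  solve_all.
Defined.
Definition MB : Tsubmodel P.
Proof.
  refine {| dom := fun x => dB x = true; srel := fun x y => rB x y = true; sop := fP |};
  solve_all.
Defined.

Theorem proposition4p2 : ~ amalgamation_property.
Proof.
  intro H.
  assert (s1 : substructure MC MA).
  { split; [|split]; simpl; solve_all; split; solve_all. }
  assert (s2 : substructure MC MB).
  { split; [|split]; simpl; solve_all; split; solve_all. }
  assert (s3 : forall x, dom MC x <-> (dom MA x /\ dom MB x)).
  { simpl; intro x; destruct x; simpl; split; intuition discriminate. }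
  destruct (H P MA MB MC s1 s2 s3) as [D [g [h [[gi [gr go]] [[hi [hr ho]] agree]]]]].
  assert (r1 : rel D (g pa) (g pc)) by (apply (proj1 (gr pa pc eq_refl eq_refl)); reflexivity).
  assert (r2 : rel D (h pc) (h pb)) by (apply (proj1 (hr pc pb eq_refl eq_refl)); reflexivity).
  rewrite <- (agree pc eq_refl) in r2.
  assert (r3 := rel_trans D _ _ _ r1 r2).
  destruct (op_strict D _ _ r3) as [_ Hne].
  - intro Heq. rewrite <- Heq in r2.
    pose proof (proj2 (gr pc pa eq_refl eq_refl) r2) as Hf. simpl in Hf. discriminate.
  - apply Hne. rewrite <- (go pa eq_refl), <- (ho pb eq_refl). simpl.
    apply (agree pe eq_refl).
Qed.
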